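(* Let $n\in\mathbb{N}$. Let $\mathcal A$ be any quantum algorithm that, given quantum oracle access to a uniformly random permutation $\varphi$ of $\{0,1\}^{2n}$ and to its inverse $\varphi^{-1}$, makes $T$ queries in total and outputs a pair $(x,y)\in\{0,1\}^n\times\{0,1\}^n$. If $\mathcal A$ succeeds, i.e. outputs $(x,y)$ with $\varphi(x\|0^n)=y\|0^n$, with probability $\epsilon>0$ (over $\varphi$ and the internal randomness and measurements of $\mathcal A$), then $$\epsilon\le\frac{50(T+1)^2}{2^n}.$$
   Context: Quantum oracle access to a function $f:\{0,1\}^m\to\{0,1\}^m$ means that the algorithm may apply, at unit cost per application, the unitary $O_f:|a\rangle|b\rangle\mapsto|a\rangle|b\oplus f(a)\rangle$; each query is either to $O_\varphi$ or to $O_{\varphi^{-1}}$, and the algorithm may perform arbitrary unitaries and measurements between queries. This task is called Double-Sided Zero-Search; a pair $(x,y)$ with $\varphi(x\|0^n)=y\|0^n$ is called a zero pair of $\varphi$. *)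

(* Defs.v *)
From HB Require Import structures.
From mathcomp Require Import all_boot all_order all_algebra all_fingroup all_field.
Set Implicit Arguments. Unset Strict Implicit. Unset Printing Implicit Defensive.
Import GRing.Theory Num.Theory.
Local Open Scope ring_scope.

Definition xor_t m (u v : m.-tuple bool) : m.-tuple bool :=
  [tuple xorb (tnth u i) (tnth v i) | i < m].

Definition pad0 n (x : n.-tuple bool) : (n + n).-tuple bool :=
  cat_tuple x (nseq_tuple n false).

(* computational basis of the algorithm's register:
   (oracle-selection qubit c, query register a, answer register b, workspace w) *)
Notation basis n W :=
  (bool * (n + n).-tuple bool * (n + n).-tuple bool * 'I_W.+1)%type.

Definition vec (B : finType) := B -> algC.
Definition op (B : finType) := B -> B -> algC.
Definition apply (B : finType) (U : op B) (v : vec B) : vec B :=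
  fun i => \sum_j U i j * v j.
Definition delta (B : finType) (s0 : B) : vec B := fun t => (t == s0)%:R.
Definition unitary (B : finType) (U : op B) : Prop :=
  forall i k, \sum_j (U j i)^* * U j k = (i == k)%:R.

Definition oracle n W (phi : {perm (n + n).-tuple bool}) : op (basis n W) :=
  fun s t =>
    (t == let: (c, a, b, w) := s in
          (c, a, xor_t b (if c then (phi^-1)%g a else phi a), w))%:R.

Fixpoint run n W (phi : {perm (n + n).-tuple bool}) (U : nat -> op (basis n W))
  (s0 : basis n W) (k : nat) : vec (basis n W) :=
  match k with
  | 0 => apply (U 0%N) (delta s0)
  | k'.+1 => apply (U k) (apply (oracle phi) (run phi U s0 k'))
  end.

Definition zero_pair n (phi : {perm (n + n).-tuple bool})
  (xy : n.-tuple bool * n.-tuple bool) : bool :=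
  phi (pad0 xy.1) == pad0 xy.2.

(* measure in the computational basis, then classical post-processing out *)
Definition success_prob n W (phi : {perm (n + n).-tuple bool})
  (U : nat -> op (basis n W)) (s0 : basis n W)
  (out : basis n W -> n.-tuple bool * n.-tuple bool) (T : nat) : algC :=
  \sum_(s | zero_pair phi (out s)) `|run phi U s0 T s| ^+ 2.

Definition avg_success n W (U : nat -> op (basis n W)) (s0 : basis n W)
  (out : basis n W -> n.-tuple bool * n.-tuple bool) (T : nat) : algC :=
  (#|{perm (n + n).-tuple bool}|%:R)^-1 *
  \sum_(phi : {perm (n + n).-tuple bool}) success_prob phi U s0 out T.

(* Main.v *)
Require Import Defs.
From mathcomp Require Import all_boot all_order all_algebra all_fingroup all_field.
From mathcomp Require Import ring zify.
Import Order.TTheory GRing.Theory Num.Theory.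
Local Open Scope ring_scope.
Set Implicit Arguments. Unset Strict Implicit. Unset Printing Implicit Defensive.

Definition nrm2 (B : finType) (v : vec B) : algC := \sum_s `|v s| ^+ 2.

Lemma nrm2_ge0 (B : finType) (v : vec B) : 0 <= nrm2 v.
Proof. by apply: sumr_ge0 => s _; rewrite exprn_ge0. Qed.

Lemma sq_ge0 (x : algC) : 0 <= `|x| ^+ 2.
Proof. by rewrite exprn_ge0. Qed.

Lemma key_ineq (k : nat) (u e : algC) :
  k%:R * `|u + e| ^+ 2 <= (k.+1)%:R * `|u| ^+ 2 + (k * k.+1)%:R * `|e| ^+ 2.
Proof.
have h1 : `|u + e| ^+ 2 <= (`|u| + `|e|) ^+ 2.
  by apply: lerXn2r; rewrite ?nnegrE ?addr_ge0 // ler_normD.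
apply: le_trans (_ : k%:R * (`|u| + `|e|) ^+ 2 <= _).
  by apply: ler_wpM2l.
rewrite -subr_ge0.
have -> : (k.+1)%:R * `|u| ^+ 2 + (k * k.+1)%:R * `|e| ^+ 2 - k%:R * (`|u| + `|e|) ^+ 2
   = (`|u| - k%:R * `|e|) ^+ 2.
  rewrite -addn1 natrM natrD; ring.
rewrite -real_normK ?exprn_ge0 //.
by apply: rpredB; [apply: ger0_real | apply: rpredM; apply: ger0_real].
Qed.

Lemma key2 (u e : algC) : `|u + e| ^+ 2 <= 2%:R * `|u| ^+ 2 + 2%:R * `|e| ^+ 2.
Proof. by have := key_ineq 1 u e; rewrite mul1r. Qed.

Lemma nrm2_unitary (B : finType) (U : op B) (v : vec B) :
  unitary U -> nrm2 (apply U v) = nrm2 v.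
Proof.
move=> HU; rewrite /nrm2 /apply.
under eq_bigr => i _ do rewrite normCK rmorph_sum mulr_suml.
under eq_bigr => i _ do under eq_bigr => j _ do rewrite mulr_sumr.
rewrite exchange_big /=.
under eq_bigr => j _ do rewrite exchange_big /=.
apply: (eq_bigr (fun j => `|v j| ^+ 2)) => j _.
rewrite (bigD1 j) //= addrC big1 ?add0r.
  transitivity (v j * (v j)^* * \sum_i (U i j)^* * U i j).
    by rewrite mulr_sumr; apply: eq_big => // i _; rewrite rmorphM /=; ring.
  by rewrite HU eqxx mulr1 normCK.
move=> k /negbTE nkj.
transitivity (v j * (v k)^* * \sum_i (U i k)^* * U i j).
  by rewrite mulr_sumr; apply: eq_big => // i _; rewrite rmorphM /=; ring.
by rewrite HU nkj mulr0.
Qed.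

Section Oracle.
Variables (n W : nat).
Local Notation B := (basis n W).
Local Notation tup := ((n + n).-tuple bool).

Definition gq (phi : {perm tup}) (c : bool) (a : tup) : tup :=
  if c then (phi^-1)%g a else phi a.
Definition qf (phi : {perm tup}) (s : B) : B :=
  let: (c, a, b, w) := s in (c, a, xor_t b (gq phi c a), w).

Lemma oracleE phi s t : oracle phi s t = (t == qf phi s)%:R.
Proof. by []. Qed.

Lemma apply_oracle phi (v : vec B) s : apply (oracle phi) v s = v (qf phi s).
Proof.
rewrite /apply (bigD1 (qf phi s)) //= oracleE eqxx mul1r big1 ?addr0 //.
by move=> t /negbTE h; rewrite oracleE h mul0r.
Qed.

Lemma xor_tK m (b g : m.-tuple bool) : xor_t (xor_t b g) g = b.
Proof.
apply: eq_from_tnth => i; rewrite !tnth_mktuple.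
by case: (tnth b i); case: (tnth g i).
Qed.

Lemma qfK phi : involutive (qf phi).
Proof. by case=> [[[c a] b] w] /=; rewrite xor_tK. Qed.

Definition dq (phi phi' : {perm tup}) (s : B) : bool :=
  let: (c, a, _, _) := s in gq phi c a != gq phi' c a.

Lemma dq_qf phi phi' psi s : dq phi phi' (qf psi s) = dq phi phi' s.
Proof. by case: s => [[[c a] b] w]. Qed.

Lemma qf_eq phi phi' s : ~~ dq phi phi' s -> qf phi s = qf phi' s.
Proof. by case: s => [[[c a] b] w] /= /negPn /eqP ->. Qed.

Lemma sum_qf psi (F : B -> algC) : \sum_s F (qf psi s) = \sum_s F s.
Proof. by rewrite [RHS](reindex_inj (can_inj (qfK psi))). Qed.

Lemma nrm2_oracle phi (v : vec B) : nrm2 (apply (oracle phi) v) = nrm2 v.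
Proof.
rewrite /nrm2; under eq_bigr => s _ do rewrite apply_oracle.
exact: (sum_qf phi (fun s => `|v s| ^+ 2)).
Qed.

Lemma nrm2_ext (v v' : vec B) : (forall s, v s = v' s) -> nrm2 v = nrm2 v'.
Proof. by move=> h; apply: eq_bigr => s _; rewrite h. Qed.

Lemma oracle_diff phi phi' (v : vec B) :
  nrm2 (fun s => v (qf phi s) - v (qf phi' s)) <=
  4%:R * \sum_s (dq phi phi' s)%:R * `|v s| ^+ 2.
Proof.
apply: (le_trans (y := \sum_s (dq phi phi' s)%:R *
   (2%:R * `|v (qf phi s)| ^+ 2 + 2%:R * `|v (qf phi' s)| ^+ 2))).
  apply: ler_sum => s _; case: (boolP (dq phi phi' s)) => h.
    by rewrite mul1r; have := key2 (v (qf phi s)) (- v (qf phi' s)); rewrite normrN.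
  by rewrite (qf_eq h) subrr normr0 expr0n /= !mul0r.
have E : forall psi, \sum_s (dq phi phi' s)%:R * `|v (qf psi s)| ^+ 2
    = \sum_s (dq phi phi' s)%:R * `|v s| ^+ 2.
  move=> psi; rewrite -(sum_qf psi (fun s => (dq phi phi' s)%:R * `|v s| ^+ 2)).
  by apply: eq_bigr => s _; rewrite dq_qf.
have -> : \sum_s (dq phi phi' s)%:R *
   (2%:R * `|v (qf phi s)| ^+ 2 + 2%:R * `|v (qf phi' s)| ^+ 2) =
   2%:R * (\sum_s (dq phi phi' s)%:R * `|v (qf phi s)| ^+ 2) +
   2%:R * (\sum_s (dq phi phi' s)%:R * `|v (qf phi' s)| ^+ 2).
  rewrite !mulr_sumr -big_split /=; apply: eq_bigr => s _; ring.
by rewrite !E -mulrDl -natrD.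
Qed.

Variables (U : nat -> op B) (s0 : B) (T : nat).
Hypothesis HU : forall i, (i <= T)%N -> unitary (U i).

Lemma run_nrm phi t : (t <= T)%N -> nrm2 (run phi U s0 t) = 1.
Proof.
elim: t => [|t IH] Ht /=.
  rewrite nrm2_unitary; last exact: HU.
  rewrite /nrm2 /delta (bigD1 s0) //= eqxx normr1 expr1n.
  by rewrite big1 ?addr0 // => s /negbTE ->; rewrite normr0 expr0n.
rewrite nrm2_unitary; last exact: HU.
rewrite nrm2_oracle IH //; exact: ltnW.
Qed.

Lemma apply_sub (V : op B) (v v' : vec B) s :
  apply V v s - apply V v' s = apply V (fun s => v s - v' s) s.
Proof.
by rewrite /apply -sumrB; apply: eq_bigr => j _; rewrite mulrBr.
Qed.

Lemma apply_ext (V : op B) (v v' : vec B) s :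
  (forall j, v j = v' j) -> apply V v s = apply V v' s.
Proof. by move=> h; apply: eq_bigr => j _; rewrite h. Qed.

Definition ediff phi phi' t : vec B :=
  fun s => run phi' U s0 t (qf phi s) - run phi' U s0 t (qf phi' s).

Lemma hybrid phi phi' t : (t <= T)%N ->
  nrm2 (fun s => run phi U s0 t s - run phi' U s0 t s) <=
  t%:R * \sum_(i < t) nrm2 (ediff phi phi' i).
Proof.
elim: t => [|t IH] Ht.
  rewrite mul0r (nrm2_ext (v' := fun _ => 0)) => [|s]; last by rewrite subrr.
  by rewrite /nrm2 big1 // => s _; rewrite normr0 expr0n.
have Ht' : (t <= T)%N by apply: ltnW.
have E1 : nrm2 (fun s => run phi U s0 t.+1 s - run phi' U s0 t.+1 s) =
   nrm2 (fun s => (run phi U s0 t (qf phi s) - run phi' U s0 t (qf phi s))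
                  + ediff phi phi' t s).
  rewrite (nrm2_ext (v' := apply (U t.+1) (fun s =>
       (run phi U s0 t (qf phi s) - run phi' U s0 t (qf phi s))
        + ediff phi phi' t s))); last first.
    move=> s; rewrite /= apply_sub; apply: apply_ext => j.
    by rewrite !apply_oracle /ediff addrA subrK.
  by rewrite nrm2_unitary; last exact: HU.
rewrite E1.
case: t IH Ht Ht' {E1} => [|k] IH Ht Ht'.
  rewrite (nrm2_ext (v' := ediff phi phi' 0)); last by move=> s; rewrite /= subrr add0r.
  by rewrite big_ord1 mul1r.
set E := \sum_(i < k.+1) nrm2 (ediff phi phi' i).
set e := nrm2 (ediff phi phi' k.+1).
have Hd := IH Ht'.
rewrite -(ler_pM2l (x := k.+1%:R)) ?ltr0Sn //.
apply: (le_trans (y := (k.+2)%:R * nrm2 (fun s => run phi U s0 k.+1 s - run phi' U s0 k.+1 s)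
    + (k.+1 * k.+2)%:R * e)).
  rewrite {2}/nrm2 -(sum_qf phi (fun s => `|run phi U s0 k.+1 s - run phi' U s0 k.+1 s| ^+ 2)).
  rewrite /e /nrm2 !mulr_sumr -big_split /=; apply: ler_sum => s _; exact: key_ineq.
apply: (le_trans (y := (k.+2)%:R * ((k.+1)%:R * E) + (k.+1 * k.+2)%:R * e)).
  by rewrite lerD2r; apply: ler_wpM2l.
have -> : \sum_(i < k.+2) nrm2 (ediff phi phi' i) = E + e by rewrite big_ord_recr.
rewrite natrM le_eqVlt; apply/orP; left; apply/eqP; ring.
Qed.
End Oracle.

Section Perm.
Variable n : nat.
Local Notation tup := ((n + n).-tuple bool).
Local Notation ntup := (n.-tuple bool).

Definition sw (a u : tup) (phi : {perm tup}) : {perm tup} :=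
  (tperm a ((phi^-1)%g u) * phi)%g.

Lemma sw_a a u (phi : {perm tup}) : sw a u phi a = u.
Proof. by rewrite /sw permM tpermL permKV. Qed.

Lemma swK a u v (phi : {perm tup}) : phi a = v -> sw a v (sw a u phi) = phi.
Proof.
move=> Hv; rewrite /sw.
have -> : ((tperm a ((phi^-1)%g u) * phi)^-1)%g v = (phi^-1)%g u.
  by rewrite invMg tpermV permM -Hv permK tpermL.
by rewrite mulgA tperm2 mul1g.
Qed.

Lemma pad0_inj : injective (@pad0 n).
Proof.
move=> x y /(congr1 val) /= /(congr1 (take n)).
by rewrite !take_size_cat ?size_tuple // => /val_inj.
Qed.

Lemma sum_inj1 (f : ntup -> tup) (aa : tup) : injective f ->
  (\sum_x (aa == f x) <= 1)%N.
Proof.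
move=> fi; case: (pickP (fun x => aa == f x)) => [x1 Hx1 | none].
  rewrite (bigD1 x1) //= Hx1 big1 // => x nx.
  apply/eqP; rewrite eqb0; apply: contra nx => /eqP h.
  by apply/eqP; apply: fi; rewrite -h (eqP Hx1).
by rewrite big1 // => x _; rewrite none.
Qed.

Lemma sum_ind2 (f g : ntup -> tup) (aa : tup) : injective f -> injective g ->
  (\sum_x \sum_y ((aa == f x) + (aa == g y)) <= 2 * #|{: ntup}|)%N.
Proof.
move=> fi gi.
rewrite (eq_bigr (fun x => #|{: ntup}| * (aa == f x) + \sum_y (aa == g y))%N); last first.
  by move=> x _; rewrite big_split /= sum_nat_const mulnC.
rewrite big_split /= -big_distrr /= sum_nat_const.
have h1 := sum_inj1 aa fi; have h2 := sum_inj1 aa gi.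
rewrite mul2n -addnn leq_add //.
  by rewrite -[X in (_ <= X)%N]muln1 leq_mul2l h1 orbT.
by rewrite -[X in (_ <= X)%N]muln1 leq_mul2l h2 orbT.
Qed.
End Perm.

Section Main.
Variables (n W : nat).
Local Notation B := (basis n W).
Local Notation tup := ((n + n).-tuple bool).
Local Notation ntup := (n.-tuple bool).
Variables (U : nat -> op B) (s0 : B) (out : B -> ntup * ntup) (T : nat).
Hypothesis HU : forall i, (i <= T)%N -> unitary (U i).

Definition pz (phi : {perm tup}) (z : ntup * ntup) : algC :=
  \sum_(s | out s == z) `|run phi U s0 T s| ^+ 2.

Lemma pz_ge0 phi z : 0 <= pz phi z.
Proof. by apply: sumr_ge0 => s _; apply: sq_ge0. Qed.

Lemma sum_sub_le (I : finType) (P : pred I) (F : I -> algC) :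
  (forall i, 0 <= F i) -> \sum_(i | P i) F i <= \sum_i F i.
Proof.
move=> h; rewrite [X in X <= _]big_mkcond; apply: ler_sum => i _.
by case: (P i).
Qed.

Lemma sum_pz phi : \sum_z pz phi z = 1.
Proof.
rewrite -(run_nrm s0 HU phi (leqnn T)) /nrm2 (partition_big out xpredT) //=.
Qed.

Lemma success_split phi :
  success_prob phi U s0 out T = \sum_(z | zero_pair phi z) pz phi z.
Proof.
rewrite /success_prob (partition_big out (zero_pair phi)) //=.
apply: eq_bigr => z zz; apply: eq_bigl => s.
by case: (eqVneq (out s) z) => [->|]; rewrite ?zz ?andbF.
Qed.

Lemma success_le1 phi : success_prob phi U s0 out T <= 1.
Proof.
rewrite -(run_nrm s0 HU phi (leqnn T)) /success_prob /nrm2.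
by apply: sum_sub_le => s; apply: sq_ge0.
Qed.

Lemma pz_bound phi phi' z :
  pz phi z <= 2%:R * nrm2 (fun s => run phi U s0 T s - run phi' U s0 T s)
              + 2%:R * pz phi' z.
Proof.
apply: (le_trans (y := \sum_(s | out s == z)
   (2%:R * `|run phi U s0 T s - run phi' U s0 T s| ^+ 2
    + 2%:R * `|run phi' U s0 T s| ^+ 2))).
  by apply: ler_sum => s _; have := key2 (run phi U s0 T s - run phi' U s0 T s)
        (run phi' U s0 T s); rewrite subrK.
rewrite big_split /= -!mulr_sumr lerD2r; apply: ler_wpM2l => //.
by apply: sum_sub_le => s; apply: sq_ge0.
Qed.

Definition ind (a y : tup) (phi' : {perm tup}) (s : B) : nat :=
  let: (c, aa, _, _) := s in
  if c then ((aa == phi' a) + (aa == y))%N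
  else ((aa == a) + (aa == (phi'^-1)%g y))%N.

Lemma dq_sw a y (phi' : {perm tup}) s :
  (dq (sw a y phi') phi' s <= ind a y phi' s)%N.
Proof.
case: s => [[[c aa] b] w] /=; rewrite /gq /sw.
case: c.
  case: (boolP ((aa == phi' a) || (aa == y))) => [|/norP [h1 h2]].
    move=> H; apply: leq_trans (leq_b1 _) _.
    by case/orP: H => ->; [rewrite leq_addr | rewrite leq_addl].
  rewrite invMg tpermV permM tpermD ?eqxx //.
    by apply: contra h1 => /eqP ->; rewrite permKV.
  by rewrite (inj_eq perm_inj) eq_sym.
case: (boolP ((aa == a) || (aa == (phi'^-1)%g y))) => [|/norP [h1 h2]].
  move=> H; apply: leq_trans (leq_b1 _) _.
  by case/orP: H => ->; [rewrite leq_addr | rewrite leq_addl].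
by rewrite permM tpermD ?eqxx // eq_sym.
Qed.


Definition Gz (phi' : {perm tup}) (z : ntup * ntup) : algC :=
  2%:R * (T%:R * \sum_(t < T) 4%:R * \sum_s
     (ind (pad0 z.1) (pad0 z.2) phi' s)%:R * `|run phi' U s0 t s| ^+ 2)
  + 2%:R * pz phi' z.

Lemma H_le_G phi' z :
  2%:R * nrm2 (fun s => run (sw (pad0 z.1) (pad0 z.2) phi') U s0 T s
                        - run phi' U s0 T s) + 2%:R * pz phi' z <= Gz phi' z.
Proof.
rewrite /Gz lerD2r; apply: ler_wpM2l => //.
apply: le_trans (hybrid s0 HU _ _ (leqnn T)) _.
apply: ler_wpM2l => //; apply: ler_sum => t _.
apply: le_trans (oracle_diff _ _ _) _.
apply: ler_wpM2l => //; apply: ler_sum => s _.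
apply: ler_wpM2r; first exact: sq_ge0.
by rewrite ler_nat dq_sw.
Qed.

Lemma stepA z w :
  \sum_(phi : {perm tup} | zero_pair phi z) pz phi z <=
  \sum_(phi' : {perm tup} | phi' (pad0 z.1) == w) Gz phi' z.
Proof.
set a := pad0 z.1; set y := pad0 z.2.
pose H (phi' : {perm tup}) := 2%:R * nrm2 (fun s => run (sw a y phi') U s0 T s
                        - run phi' U s0 T s) + 2%:R * pz phi' z.
apply: (le_trans (y := \sum_(phi' : {perm tup} | phi' a == w) H phi')); last first.
  by apply: ler_sum => phi' _; apply: H_le_G.
apply: (le_trans (y := \sum_(phi : {perm tup} | zero_pair phi z) H (sw a w phi))).
  apply: ler_sum => phi zp; rewrite /H swK; last exact/eqP.
  exact: pz_bound.
rewrite [X in _ <= X](reindex_onto (sw a w) (sw a y)); last first.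
  by move=> phi' /eqP h; apply: swK.
rewrite le_eqVlt; apply/orP; left; apply/eqP; apply: eq_bigl => phi.
rewrite sw_a eqxx /=.
case: (boolP (zero_pair phi z)) => zp.
  by rewrite swK ?eqxx //; apply/eqP.
apply/esym/negbTE; apply: contra zp => /eqP <-.
by rewrite /zero_pair -/a -/y sw_a.
Qed.

Lemma sum_ind_le phi' (s : B) :
  (\sum_(z : ntup * ntup) ind (pad0 z.1) (pad0 z.2) phi' s <= 2 * #|{: ntup}|)%N.
Proof.
rewrite -(pair_bigA _ (fun x y => ind (pad0 x) (pad0 y) phi' s)) /=.
case: s => [[[c aa] b] w] /=; case: c.
  apply: (sum_ind2 (f := fun x => phi' (pad0 x)) (g := @pad0 n)); last exact: pad0_inj.
  by move=> x x' /perm_inj /pad0_inj.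
apply: (sum_ind2 (f := @pad0 n) (g := fun y => (phi'^-1)%g (pad0 y))); first exact: pad0_inj.
by move=> x x' /perm_inj /pad0_inj.
Qed.

Lemma sumz_G phi' :
  \sum_z Gz phi' z <= (16 * #|{: ntup}| * T ^ 2 + 2)%:R.
Proof.
rewrite /Gz big_split /= -!mulr_sumr sum_pz mulr1.
rewrite exchange_big /=.
set N := #|{: ntup}|.
apply: (le_trans (y := 2%:R * (T%:R * \sum_(t < T) 4%:R * (2 * N)%:R) + 2%:R)).
  rewrite lerD2r; apply: ler_wpM2l => //; apply: ler_wpM2l => //.
  apply: ler_sum => t _; rewrite -mulr_sumr; apply: ler_wpM2l => //.
  rewrite exchange_big /=.
  apply: (le_trans (y := \sum_s (2 * N)%:R * `|run phi' U s0 t s| ^+ 2)).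
    apply: ler_sum => s _; rewrite -mulr_suml -natr_sum.
    by apply: ler_wpM2r; [exact: sq_ge0 | rewrite ler_nat sum_ind_le].
  rewrite -mulr_sumr; have := run_nrm s0 HU phi' (ltnW (ltn_ord t)).
  by rewrite /nrm2 => ->; rewrite mulr1.
rewrite sumr_const card_ord le_eqVlt; apply/orP; left; apply/eqP.
rewrite -mulr_natr; ring.
Qed.
End Main.

Lemma Gz_ge0 n W (U : nat -> op (basis n W)) s0 out T phi' z :
  0 <= Gz U s0 out T phi' z.
Proof.
rewrite /Gz; apply: addr_ge0; apply: mulr_ge0 => //; last exact: pz_ge0.
apply: mulr_ge0 => //; apply: sumr_ge0 => t _; apply: mulr_ge0 => //.
by apply: sumr_ge0 => s _; apply: mulr_ge0 => //; apply: sq_ge0.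
Qed.

Lemma main_ineq (n T W : nat) (U : nat -> op (basis n W)) (s0 : basis n W)
  (out : basis n W -> n.-tuple bool * n.-tuple bool) :
  (forall i, (i <= T)%N -> unitary (U i)) ->
  (\sum_(phi : {perm (n + n).-tuple bool}) success_prob phi U s0 out T) *
     (#|{: (n + n).-tuple bool}| - #|{: n.-tuple bool}|)%:R <=
  #|{perm (n + n).-tuple bool}|%:R * (16 * #|{: n.-tuple bool}| * T ^ 2 + 2)%:R.
Proof.
move=> HU.
set Sc := ~: [set pad0 x | x : n.-tuple bool].
have cSc : #|Sc| = (#|{: (n + n).-tuple bool}| - #|{: n.-tuple bool}|)%N.
  rewrite -(cardsC [set pad0 x | x : n.-tuple bool]) card_imset; last exact: pad0_inj.
  by rewrite addKn.
rewrite -cSc.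
have E : \sum_(phi : {perm (n + n).-tuple bool}) success_prob phi U s0 out T =
   \sum_z \sum_(phi : {perm (n + n).-tuple bool} | zero_pair phi z) pz U s0 out T phi z.
  under eq_bigr => phi _ do rewrite success_split big_mkcond.
  rewrite exchange_big; apply: eq_bigr => z _; by rewrite [RHS]big_mkcond.
rewrite E mulr_suml.
apply: (le_trans (y := \sum_z \sum_(w in Sc)
   \sum_(phi' : {perm (n + n).-tuple bool} | phi' (pad0 z.1) == w) Gz U s0 out T phi' z)).
  apply: ler_sum => z _.
  rewrite (_ : #|Sc|%:R = \sum_(w in Sc) (1 : algC)); last by rewrite sumr_const.
  rewrite mulr_sumr.
  apply: ler_sum => w _; rewrite mulr1.
  apply: le_trans (stepA s0 out HU z w).
  by rewrite le_eqVlt; apply/orP; left; apply/eqP; apply: eq_bigl.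
apply: (le_trans (y := \sum_z \sum_(phi' : {perm (n + n).-tuple bool}) Gz U s0 out T phi' z)).
  apply: ler_sum => z _.
  rewrite [X in _ <= X](partition_big (fun phi' : {perm (n + n).-tuple bool} => phi' (pad0 z.1)) xpredT) //=.
  apply: sum_sub_le => w; apply: sumr_ge0 => phi' _; exact: Gz_ge0.
rewrite exchange_big /=.
apply: (le_trans (y := \sum_(phi' : {perm (n + n).-tuple bool}) (16 * #|{: n.-tuple bool}| * T ^ 2 + 2)%:R)).
  by apply: ler_sum => phi' _; apply: sumz_G.
by rewrite sumr_const mulr_natl.
Qed.

Unset Implicit Arguments.

Theorem theorem4 (n T W : nat) (U : nat -> op (basis n W)) (s0 : basis n W)
  (out : basis n W -> n.-tuple bool * n.-tuple bool) :
  (forall i, (i <= T)%N -> unitary (U i)) ->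
  0 < avg_success U s0 out T ->
  avg_success U s0 out T <= 50%:R * (T.+1)%:R ^+ 2 / 2%:R ^+ n.
Proof.
move=> HU _.
have Hm := main_ineq s0 out HU.
set S := \sum_(phi : {perm (n + n).-tuple bool}) success_prob phi U s0 out T in Hm.
set F := #|{perm (n + n).-tuple bool}| in Hm.
have cN : #|{: n.-tuple bool}| = (2 ^ n)%N by rewrite card_tuple card_bool.
have cM : #|{: (n + n).-tuple bool}| = (2 ^ n * 2 ^ n)%N by rewrite card_tuple card_bool expnD.
rewrite cN cM in Hm.
have F0 : (0 < F)%N by apply/card_gt0P; exists 1%g.
have S0 : 0 <= S by apply: sumr_ge0 => phi _; rewrite /success_prob; apply: sumr_ge0 => s _; apply: sq_ge0.
have S1 : S <= F%:R.
  rewrite /F -sumr_const; apply: ler_sum => phi _; exact: success_le1.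
rewrite /avg_success -/S -/F.
set N := (2 ^ n)%N in Hm.
have -> : (2%:R : algC) ^+ n = N%:R by rewrite natrX.
have N0 : (0 < N)%N by rewrite expn_gt0.
rewrite ler_pdivlMr ?ltr0n // -mulrA ler_pdivrMl ?ltr0n //.
(* goal : S * N <= F * (50 * (T+1)^2) *)
case: (leqP N 1) => HN.
  have -> : N = 1%N by apply/eqP; rewrite eqn_leq HN N0.
  rewrite mulr1; apply: le_trans S1 _.
  rewrite -[X in X <= _]mulr1 ler_wpM2l // -natrX -natrM ler1n.
  by rewrite muln_gt0 expn_gt0.
rewrite -(ler_pM2l (x := N%:R)) ?ltr0n //.
apply: (le_trans (y := S * (2 * (N * N - N))%:R)).
  rewrite mulrC -mulrA ler_wpM2l // -natrM ler_nat; nia.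
rewrite natrM mulrCA.
apply: (le_trans (y := 2%:R * (F%:R * (16 * N * T ^ 2 + 2)%:R))).
  by apply: ler_wpM2l.
rewrite mulrCA [X in _ <= X]mulrCA ler_wpM2l // -natrX -!natrM ler_nat; nia.
Qed.
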